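(* (1) $I$ is a closed (two-sided) ideal in $A^\mathcal U$ (and $I\subseteq A^{c\mathcal U}$). (2) The $\mathrm{C}^*$-algebra $A^{c\mathcal U}/I$ is unital. (3) The map $q\circ\Delta:A\to A^{c\mathcal U}/I$ is injective, where $q:A^{c\mathcal U}\to A^{c\mathcal U}/I$ is the quotient map and $\Delta(a)=(a,a,\dots)^\bullet$ is the diagonal embedding. (4) $(q\circ\Delta)(A)$ is an essential ideal in $A^{c\mathcal U}/I$.
   Context: $X$ is a second countable, locally compact space with basepoint $o$ and a fixed compatible proper metric $d$; $B(r)$ is the closed ball of radius $r$ about $o$. $A=C_0(X)$. $\mathcal U$ is a nonprincipal ultrafilter on $\mathbb N$, and $A^\mathcal U=\ell^\infty(A)/\{(f_n):\lim_{n,\mathcal U}\|f_n\|=0\}$ is the ultrapower, with $(f_n)^\bullet$ the class of $(f_n)$. A sequence $(f_n)\in\ell^\infty(A)$ is $\mathcal U$-equicontinuous on bounded sets if for every $r,\epsilon>0$ there is $\delta>0$ such that for a set of $n$ belonging to $\mathcal U$, $|f_n(s)-f_n(t)|\le\epsilon$ for all $s,t\in B(r)$ with $d(s,t)<\delta$; $A^{c\mathcal U}$ is the $\mathrm{C}^*$-subalgebra of $A^\mathcal U$ consisting of classes of such sequences. $I:=\{(f_n)^\bullet\in A^\mathcal U:\exists r_n\in\mathbb R \text{ with } \lim_{n,\mathcal U}r_n=+\infty \text{ and } f_n|_{B(r_n)}\equiv 0\text{ for all } n\}$. An ideal $J$ in a $\mathrm{C}^*$-algebra $C$ is essential if $cJ=0$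 implies $c=0$ for $c\in C$. *)

(* Defs.v *)
From Stdlib Require Import Reals List.
Open Scope R_scope.

Record Cx := mkC { re : R; im : R }.
Definition C0x : Cx := mkC 0 0.
Definition Cadd (z w : Cx) : Cx := mkC (re z + re w) (im z + im w).
Definition Copp (z : Cx) : Cx := mkC (- re z) (- im z).
Definition Csub (z w : Cx) : Cx := Cadd z (Copp w).
Definition Cmul (z w : Cx) : Cx :=
  mkC (re z * re w - im z * im w) (re z * im w + im z * re w).
Definition Cnorm (z : Cx) : R := sqrt (re z * re z + im z * im z).

Section Space.
Variable X : Type.
Variable d : X -> X -> R.

Definition is_metric : Prop :=
  (forall x y, 0 <= d x y) /\ (forall x y, d x y = 0 <-> x = y) /\
  (forall x y, d x y = d y x) /\ (forall x y z, d x z <= d x y + d y z).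

(** Topology of X = the metric topology of d ("compatible metric"). *)
Definition open_set (S : X -> Prop) : Prop :=
  forall x, S x -> exists e, 0 < e /\ forall y, d x y < e -> S y.

Definition compact_set (K : X -> Prop) : Prop :=
  forall (Ix : Type) (G : Ix -> X -> Prop),
    (forall i, open_set (G i)) -> (forall x, K x -> exists i, G i x) ->
    exists l : list Ix, forall x, K x -> exists i, In i l /\ G i x.

Definition closed_ball (c : X) (r : R) : X -> Prop := fun x => d c x <= r.

Definition proper_metric : Prop :=
  forall c r, compact_set (closed_ball c r).

Definition second_countable : Prop :=
  exists B : nat -> X -> Prop, (forall n, open_set (B n)) /\
    forall S x, open_set S -> S x ->
      exists n, B n x /\ forall y, B n y -> S y.

Definition locally_compact : Prop :=
  forall x, exists V K, open_set V /\ compact_set K /\ V x /\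
    forall y, V y -> K y.

(** A = C_0(X) (complex valued) *)
Definition continuous (f : X -> Cx) : Prop :=
  forall x e, 0 < e -> exists del, 0 < del /\
    forall y, d x y < del -> Cnorm (Csub (f y) (f x)) < e.

Definition C0 (f : X -> Cx) : Prop :=
  continuous f /\
  forall e, 0 < e -> exists K, compact_set K /\
    forall x, ~ K x -> Cnorm (f x) < e.

(** Sequences of functions, representatives of elements of A^U *)
Definition Seq := nat -> X -> Cx.

Definition seq_add (F G : Seq) : Seq := fun n x => Cadd (F n x) (G n x).
Definition seq_sub (F G : Seq) : Seq := fun n x => Csub (F n x) (G n x).
Definition seq_mul (F G : Seq) : Seq := fun n x => Cmul (F n x) (G n x).
Definition seq_scal (c : Cx) (F : Seq) : Seq := fun n x => Cmul c (F n x).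
Definition seq_zero : Seq := fun _ _ => C0x.
Definition diag (a : X -> Cx) : Seq := fun _ => a.

Definition InSeq (F : Seq) : Prop :=
  (forall n, C0 (F n)) /\ exists M, forall n x, Cnorm (F n x) <= M.

Variable U : (nat -> Prop) -> Prop.

Definition ultrafilter : Prop :=
  (forall P Q : nat -> Prop, U P -> (forall n, P n -> Q n) -> U Q) /\
  (forall P Q, U P -> U Q -> U (fun n => P n /\ Q n)) /\
  ~ U (fun _ => False) /\
  (forall P, U P \/ U (fun n => ~ P n)).

Definition nonprincipal : Prop := forall k, U (fun n => n <> k).

(** lim_{n,U} ||F_n|| <= e  (sup norm) *)
Definition ult_le (F : Seq) (e : R) : Prop :=
  forall eta, 0 < eta -> U (fun n => forall x, Cnorm (F n x) <= e + eta).

Definition ult_null (F : Seq) : Prop := ult_le F 0.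

(** same class in A^U *)
Definition ueq (F G : Seq) : Prop := ult_null (seq_sub F G).

Variable o : X.

Definition uequicont (F : Seq) : Prop :=
  forall r e, 0 < r -> 0 < e -> exists del, 0 < del /\
    U (fun n => forall s t, d o s <= r -> d o t <= r -> d s t < del ->
         Cnorm (Csub (F n s) (F n t)) <= e).

(** the class of F lies in A^{cU} *)
Definition InCU (F : Seq) : Prop :=
  InSeq F /\ exists G, InSeq G /\ ueq F G /\ uequicont G.

(** the class of F lies in I *)
Definition InI (F : Seq) : Prop :=
  InSeq F /\ exists (G : Seq) (r : nat -> R), InSeq G /\ ueq F G /\
    (forall M, U (fun n => M <= r n)) /\
    forall n x, d o x <= r n -> G n x = C0x.
End Space.

(* Main.v *)
Require Import Defs.
From Stdlib Require Import Reals List Lra Lia Psatz Classical ClassicalEpsilon FunctionalExtensionality.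
Open Scope R_scope.
Require Import Defs.

Ltac cx_eq := intros; repeat match goal with z : Cx |- _ => destruct z end;
  unfold Csub, Cadd, Copp, Cmul, C0x; simpl; f_equal; ring.

Lemma Cnorm_ge0 z : 0 <= Cnorm z.
Proof. unfold Cnorm; apply sqrt_pos. Qed.

Lemma Cnorm_sq z : Cnorm z * Cnorm z = re z * re z + im z * im z.
Proof. unfold Cnorm; apply sqrt_sqrt; nra. Qed.

Lemma Cnorm_C0 : Cnorm C0x = 0.
Proof. unfold Cnorm, C0x; simpl. replace (0*0+0*0) with 0 by ring. apply sqrt_0. Qed.

Lemma Cnorm_eq0 z : Cnorm z = 0 -> z = C0x.
Proof. intro H. pose proof (Cnorm_sq z) as H1. rewrite H in H1.
 destruct z as [a b]; simpl in *. unfold C0x. f_equal; nra. Qed.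

Lemma Cnorm_triang z w : Cnorm (Cadd z w) <= Cnorm z + Cnorm w.
Proof.
  pose proof (Cnorm_sq z). pose proof (Cnorm_sq w). pose proof (Cnorm_sq (Cadd z w)).
  pose proof (Cnorm_ge0 z). pose proof (Cnorm_ge0 w). pose proof (Cnorm_ge0 (Cadd z w)).
  destruct z as [a b]; destruct w as [c e]; unfold Cadd in *; simpl in *.
  assert (HL : (a*c+b*e)*(a*c+b*e) <= (a*a+b*b)*(c*c+e*e)) by (pose proof (Rle_0_sqr (a*e-b*c)); unfold Rsqr in *; nra).
  assert (a*c+b*e <= Cnorm (mkC a b) * Cnorm (mkC c e)).
  { destruct (Rle_lt_dec (a*c+b*e) (Cnorm (mkC a b) * Cnorm (mkC c e))); auto.
    exfalso. assert (0 <= Cnorm (mkC a b) * Cnorm (mkC c e)) by nra. nra. }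
  nra.
Qed.

Lemma Cnorm_opp z : Cnorm (Copp z) = Cnorm z.
Proof. destruct z; unfold Cnorm, Copp; simpl; f_equal; ring. Qed.

Lemma Cnorm_mul z w : Cnorm (Cmul z w) = Cnorm z * Cnorm w.
Proof. destruct z as [a b]; destruct w as [c e]; unfold Cnorm, Cmul; simpl.
 rewrite <- sqrt_mult by nra. f_equal; ring. Qed.

Lemma Cnorm_re z : Rabs (re z) <= Cnorm z.
Proof. pose proof (Cnorm_sq z). pose proof (Cnorm_ge0 z).
 apply Rabs_le; split; nra. Qed.
Lemma Cnorm_im z : Rabs (im z) <= Cnorm z.
Proof. pose proof (Cnorm_sq z). pose proof (Cnorm_ge0 z).
 apply Rabs_le; split; nra. Qed.
Lemma Cnorm_le_reim z : Cnorm z <= Rabs (re z) + Rabs (im z).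
Proof. pose proof (Cnorm_sq z). pose proof (Cnorm_ge0 z).
 pose proof (Rabs_pos (re z)). pose proof (Rabs_pos (im z)).
 assert (re z * re z = Rabs (re z) * Rabs (re z)) by (rewrite <- Rabs_mult; symmetry; apply Rabs_right; nra).
 assert (im z * im z = Rabs (im z) * Rabs (im z)) by (rewrite <- Rabs_mult; symmetry; apply Rabs_right; nra).
 nra. Qed.

Lemma Cnorm_sub_sym z w : Cnorm (Csub z w) = Cnorm (Csub w z).
Proof. replace (Csub z w) with (Copp (Csub w z)) by cx_eq. apply Cnorm_opp. Qed.

Lemma Cnorm_sub_tri z u w : Cnorm (Csub z w) <= Cnorm (Csub z u) + Cnorm (Csub u w).
Proof. replace (Csub z w) with (Cadd (Csub z u) (Csub u w)) by cx_eq. apply Cnorm_triang. Qed.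

Lemma Cnorm_sub_le z w : Cnorm (Csub z w) <= Cnorm z + Cnorm w.
Proof. unfold Csub. rewrite <- (Cnorm_opp w). apply Cnorm_triang. Qed.

Lemma Cnorm_le_sub z w : Cnorm z <= Cnorm w + Cnorm (Csub z w).
Proof. replace z with (Cadd w (Csub z w)) at 1 by cx_eq. apply Cnorm_triang. Qed.
Lemma nat_above (r : R) : exists n : nat, r < INR n.
Proof. destruct (INR_archimed 1 r) as [n Hn]; [lra|]. exists n; lra. Qed.

Lemma list_minpos {A} (l : list A) (f : A -> R) :
  (forall y, In y l -> 0 < f y) -> exists del, 0 < del /\ forall y, In y l -> del <= f y.
Proof.
  induction l as [|a l IH]; intros H.
  - exists 1; split; [lra| intros y []].
  - destruct IH as [del [Hd Hl]]. { intros y Hy; apply H; right; auto. }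
    exists (Rmin del (f a)). split. { apply Rmin_pos; auto. apply H; left; auto. }
    intros y [<-|Hy]. apply Rmin_r. eapply Rle_trans. apply Rmin_l. auto.
Qed.

Lemma list_max {A} (l : list A) (f : A -> R) : exists B, forall y, In y l -> f y <= B.
Proof.
  induction l as [|a l IH].
  - exists 0; intros y [].
  - destruct IH as [B HB]. exists (Rmax B (f a)).
    intros y [<-|Hy]. apply Rmax_r. eapply Rle_trans. apply HB; auto. apply Rmax_l.
Qed.

Definition clamp (t : R) : R := Rmax 0 (Rmin 1 t).
Lemma clamp_range t : 0 <= clamp t <= 1.
Proof. unfold clamp, Rmax, Rmin; repeat destruct Rle_dec; lra. Qed.
Lemma clamp_lip a b : Rabs (clamp a - clamp b) <= Rabs (a - b).
Proof. unfold clamp, Rmax, Rmin; repeat destruct Rle_dec; unfold Rabs; repeat destruct Rcase_abs; lra. Qed.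
Lemma clamp_one t : 1 <= t -> clamp t = 1.
Proof. unfold clamp, Rmax, Rmin; repeat destruct Rle_dec; lra. Qed.
Lemma clamp_zero t : t <= 0 -> clamp t = 0.
Proof. unfold clamp, Rmax, Rmin; repeat destruct Rle_dec; lra. Qed.

Definition Cone : Cx := mkC 1 0.
Lemma Cmul_one z : Cmul Cone z = z.  Proof. cx_eq. Qed.
Lemma Cmul_comm z w : Cmul z w = Cmul w z. Proof. cx_eq. Qed.
Lemma Cnorm_realC r : Cnorm (mkC r 0) <= Rabs r.
Proof. eapply Rle_trans. apply Cnorm_le_reim. simpl. rewrite Rabs_R0. lra. Qed.

Section Main.
Variable X : Type.
Variable d : X -> X -> R.
Variable o : X.
Variable U : (nat -> Prop) -> Prop.
Hypothesis Hmet : is_metric X d.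
Hypothesis Hprop : proper_metric X d.
Hypothesis HU : ultrafilter U.
Hypothesis HUnp : nonprincipal U.

Lemma d_pos x y : 0 <= d x y. Proof. apply Hmet. Qed.
Lemma d_refl x : d x x = 0. Proof. apply Hmet; auto. Qed.
Lemma d_sym x y : d x y = d y x. Proof. apply Hmet. Qed.
Lemma d_tri x y z : d x z <= d x y + d y z. Proof. apply Hmet. Qed.

Lemma open_ball c r : open_set X d (fun y => d c y < r).
Proof. intros x Hx. exists (r - d c x). split. lra. intros y Hy. pose proof (d_tri c x y). lra. Qed.

Lemma compact_union K1 K2 : compact_set X d K1 -> compact_set X d K2 ->
  compact_set X d (fun x => K1 x \/ K2 x).
Proof.
  intros C1 C2 Ix G HG Hc.
  destruct (C1 Ix G HG) as [l1 H1]. { intros x Kx; apply Hc; auto. }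
  destruct (C2 Ix G HG) as [l2 H2]. { intros x Kx; apply Hc; auto. }
  exists (l1 ++ l2). intros x [Kx|Kx].
  - destruct (H1 x Kx) as [i [Hi Gi]]; exists i; split; auto; apply in_or_app; auto.
  - destruct (H2 x Kx) as [i [Hi Gi]]; exists i; split; auto; apply in_or_app; auto.
Qed.

Lemma compact_bounded K : compact_set X d K -> exists R, forall x, K x -> d o x <= R.
Proof.
  intros C. destruct (C nat (fun k y => d o y < INR k)) as [l Hl].
  - intros k; apply open_ball.
  - intros x _. apply nat_above.
  - destruct (list_max l INR) as [B HB]. exists B. intros x Kx.
    destruct (Hl x Kx) as [i [Hi Gi]]. specialize (HB i Hi). lra.
Qed.

Lemma cont_bounded_compact K f : compact_set X d K -> continuous X d f ->
  exists B, forall x, K x -> Cnorm (f x) <= B.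
Proof.
  intros C Hf.
  destruct (C X (fun y z => exists del, 0 < del /\
      (forall w, d y w < del -> Cnorm (Csub (f w) (f y)) < 1) /\ d y z < del)) as [l Hl].
  - intros y z [del [Hd [Hw Hz]]]. exists (del - d y z). split. lra.
    intros w Hzw. exists del. split; auto. split; auto. pose proof (d_tri y z w). lra.
  - intros x _. exists x. destruct (Hf x 1) as [del [Hd Hw]]; [lra|].
    exists del. split; auto. split; auto. rewrite d_refl; lra.
  - destruct (list_max l (fun y => Cnorm (f y) + 1)) as [B HB]. exists B.
    intros x Kx. destruct (Hl x Kx) as [y [Hy [del [Hd [Hw Hz]]]]].
    specialize (HB y Hy). specialize (Hw x Hz).
    pose proof (Cnorm_le_sub (f x) (f y)). lra.
Qed.

Lemma C0_bounded f : C0 X d f -> exists B, forall x, Cnorm (f x) <= B.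
Proof.
  intros [Hc Hv]. destruct (Hv 1) as [K [CK HK]]; [lra|].
  destruct (cont_bounded_compact K f CK Hc) as [B HB].
  exists (Rmax B 1). intros x. destruct (classic (K x)).
  - eapply Rle_trans. apply HB; auto. apply Rmax_l.
  - eapply Rle_trans. left; apply HK; auto. apply Rmax_r.
Qed.

Lemma cont_add f g : continuous X d f -> continuous X d g ->
  continuous X d (fun x => Cadd (f x) (g x)).
Proof.
  intros Hf Hg x e He.
  destruct (Hf x (e/2)) as [d1 [Hd1 H1]]; [lra|].
  destruct (Hg x (e/2)) as [d2 [Hd2 H2]]; [lra|].
  exists (Rmin d1 d2). split. apply Rmin_pos; auto.
  intros y Hy. pose proof (Rmin_l d1 d2). pose proof (Rmin_r d1 d2).
  replace (Csub (Cadd (f y) (g y)) (Cadd (f x) (g x))) with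
    (Cadd (Csub (f y) (f x)) (Csub (g y) (g x))) by cx_eq.
  eapply Rle_lt_trans. apply Cnorm_triang.
  specialize (H1 y ltac:(lra)). specialize (H2 y ltac:(lra)). lra.
Qed.

Lemma cont_opp f : continuous X d f -> continuous X d (fun x => Copp (f x)).
Proof.
  intros Hf x e He. destruct (Hf x e He) as [del [Hd H]]. exists del; split; auto.
  intros y Hy. replace (Csub (Copp (f y)) (Copp (f x))) with (Copp (Csub (f y) (f x))) by cx_eq.
  rewrite Cnorm_opp; auto.
Qed.

Lemma C0_add f g : C0 X d f -> C0 X d g -> C0 X d (fun x => Cadd (f x) (g x)).
Proof.
  intros [Hf Vf] [Hg Vg]. split. apply cont_add; auto.
  intros e He. destruct (Vf (e/2)) as [K1 [C1 H1]]; [lra|].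
  destruct (Vg (e/2)) as [K2 [C2 H2]]; [lra|].
  exists (fun x => K1 x \/ K2 x). split. apply compact_union; auto.
  intros x Hx. eapply Rle_lt_trans. apply Cnorm_triang.
  assert (~ K1 x) by tauto. assert (~ K2 x) by tauto.
  specialize (H1 x ltac:(auto)). specialize (H2 x ltac:(auto)). lra.
Qed.

Lemma C0_opp f : C0 X d f -> C0 X d (fun x => Copp (f x)).
Proof.
  intros [Hf Vf]. split. apply cont_opp; auto.
  intros e He. destruct (Vf e He) as [K [C H]]. exists K; split; auto.
  intros x Hx. rewrite Cnorm_opp; auto.
Qed.

Lemma C0_sub f g : C0 X d f -> C0 X d g -> C0 X d (fun x => Csub (f x) (g x)).
Proof. intros Hf Hg. apply (C0_add f (fun x => Copp (g x))); auto. apply C0_opp; auto. Qed.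

Lemma cont_mul f g : continuous X d f -> continuous X d g ->
  continuous X d (fun x => Cmul (f x) (g x)).
Proof.
  intros Hf Hg x e He.
  set (A := Cnorm (f x) + 1). set (B := Cnorm (g x)).
  assert (HA : 0 < A) by (pose proof (Cnorm_ge0 (f x)); unfold A; lra).
  assert (HB : 0 <= B) by apply Cnorm_ge0.
  destruct (Hf x (Rmin 1 (e / (2 * (B + 1))))) as [d1 [Hd1 H1]].
  { apply Rmin_pos. lra. apply Rdiv_lt_0_compat; lra. }
  destruct (Hg x (e / (2 * A))) as [d2 [Hd2 H2]]. { apply Rdiv_lt_0_compat; lra. }
  exists (Rmin d1 d2). split. apply Rmin_pos; auto.
  intros y Hy. pose proof (Rmin_l d1 d2). pose proof (Rmin_r d1 d2).
  specialize (H1 y ltac:(lra)). specialize (H2 y ltac:(lra)).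
  replace (Csub (Cmul (f y) (g y)) (Cmul (f x) (g x))) with
    (Cadd (Cmul (f y) (Csub (g y) (g x))) (Cmul (Csub (f y) (f x)) (g x))) by cx_eq.
  eapply Rle_lt_trans. apply Cnorm_triang. rewrite !Cnorm_mul.
  pose proof (Rmin_l 1 (e / (2 * (B + 1)))). pose proof (Rmin_r 1 (e / (2 * (B + 1)))).
  assert (Hfy : Cnorm (f y) <= A).
  { pose proof (Cnorm_le_sub (f y) (f x)). unfold A. lra. }
  fold B.
  assert (E1 : A * (e / (2 * A)) = e / 2) by (field; lra).
  assert (E2 : (e / (2 * (B + 1))) * B <= e / 2).
  { replace (e/(2*(B+1))*B) with (e/2 * (B/(B+1))) by (field; lra).
    assert (B/(B+1) <= 1). { unfold Rdiv. apply Rmult_le_reg_r with (B+1). lra. rewrite Rmult_assoc, Rinv_l by lra. lra. } assert (0 <= B/(B+1)) by (unfold Rdiv; apply Rmult_le_pos; [lra| left; apply Rinv_0_lt_compat; lra]). nra. }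
  pose proof (Cnorm_ge0 (Csub (g y) (g x))). pose proof (Cnorm_ge0 (Csub (f y) (f x))).
  pose proof (Cnorm_ge0 (f y)).
  assert (Cnorm (f y) * Cnorm (Csub (g y) (g x)) < e/2).
  { destruct (Req_dec (Cnorm (Csub (g y) (g x))) 0) as [Z|Z].
    - rewrite Z; lra.
    - apply Rle_lt_trans with (A * Cnorm (Csub (g y) (g x))). nra.
      rewrite <- E1. apply Rmult_lt_compat_l; lra. }
  assert (Cnorm (Csub (f y) (f x)) * B <= e/2). { nra. }
  lra.
Qed.

Lemma C0_mul_bdd f g B : C0 X d f -> continuous X d g -> (forall x, Cnorm (g x) <= B) ->
  C0 X d (fun x => Cmul (f x) (g x)).
Proof.
  intros [Hf Vf] Hg HB. split. apply cont_mul; auto.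
  intros e He. assert (HB0 : 0 <= B) by (eapply Rle_trans; [apply Cnorm_ge0|apply (HB o)]).
  destruct (Vf (e / (B + 1))) as [K [C H]]. { apply Rdiv_lt_0_compat; lra. }
  exists K; split; auto. intros x Hx. rewrite Cnorm_mul. specialize (H x Hx).
  specialize (HB x). pose proof (Cnorm_ge0 (f x)).
  assert (e / (B+1) * (B+1) = e) by (field; lra).
  apply Rle_lt_trans with (Cnorm (f x) * (B+1)). nra. nra.
Qed.

Lemma C0_mul f g : C0 X d f -> C0 X d g -> C0 X d (fun x => Cmul (f x) (g x)).
Proof. intros Hf Hg. destruct (C0_bounded g Hg) as [B HB]. apply C0_mul_bdd with B; auto. apply Hg. Qed.

Definition phi (c : R) (x : X) : Cx := mkC (clamp (c - d o x)) 0.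

Lemma phi_bound c x : Cnorm (phi c x) <= 1.
Proof. eapply Rle_trans. apply Cnorm_realC. pose proof (clamp_range (c - d o x)).
 rewrite Rabs_right; lra. Qed.

Lemma phi_lip c s t : Cnorm (Csub (phi c s) (phi c t)) <= d s t.
Proof.
  unfold phi, Csub, Cadd, Copp; simpl. replace (0 + - 0) with 0 by ring.
  eapply Rle_trans. apply Cnorm_realC. unfold Rminus at 1.
  eapply Rle_trans. apply clamp_lip.
  replace (c - d o s - (c - d o t)) with (d o t - d o s) by ring.
  pose proof (d_tri o s t). pose proof (d_tri o t s). rewrite (d_sym t s) in *.
  apply Rabs_le; lra.
Qed.

Lemma phi_cont c : continuous X d (phi c).
Proof. intros x e He. exists e. split; auto. intros y Hy.
 eapply Rle_lt_trans. apply phi_lip. rewrite d_sym; auto. Qed.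

Lemma phi_zero c x : c <= d o x -> phi c x = C0x.
Proof. intro H. unfold phi, C0x. rewrite clamp_zero by lra. auto. Qed.

Lemma phi_one c x : d o x <= c - 1 -> phi c x = Cone.
Proof. intro H. unfold phi, Cone. rewrite clamp_one by lra. auto. Qed.

Lemma phi_C0 c : C0 X d (phi c).
Proof.
  split. apply phi_cont. intros e He. exists (closed_ball X d o c). split. apply Hprop.
  intros x Hx. unfold closed_ball in Hx. rewrite phi_zero by lra. rewrite Cnorm_C0; auto.
Qed.

Lemma cont_const z : continuous X d (fun _ => z).
Proof. intros x e He. exists 1. split. lra. intros y _.
 replace (Csub z z) with C0x by cx_eq. rewrite Cnorm_C0; auto. Qed.

Lemma Cnorm_Cone : Cnorm Cone <= 1.
Proof. eapply Rle_trans. apply Cnorm_realC. rewrite Rabs_R1; lra. Qed.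

Lemma U_mono (P Q : nat -> Prop) : U P -> (forall n, P n -> Q n) -> U Q.
Proof. apply HU. Qed.
Lemma U_and (P Q : nat -> Prop) : U P -> U Q -> U (fun n => P n /\ Q n).
Proof. apply HU. Qed.
Lemma U_ex (P : nat -> Prop) : U P -> exists n, P n.
Proof. intro H. apply NNPP. intro N. destruct HU as [_ [_ [HF _]]]. apply HF.
 apply (U_mono P); auto. intros n Pn. apply N. exists n; auto. Qed.
Lemma U_true : U (fun _ => True).
Proof. destruct HU as [_ [_ [_ H]]]. destruct (H (fun _ => True)); auto.
 apply (U_mono _ _ H0). auto. Qed.
Lemma U_and3 (P Q S : nat -> Prop) : U P -> U Q -> U S -> U (fun n => P n /\ Q n /\ S n).
Proof. intros. apply U_and; auto. apply U_and; auto. Qed.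

Lemma U_nat N : U (fun n => (N <= n)%nat).
Proof.
  induction N. - apply (U_mono _ _ U_true). intros; lia.
  - apply (U_mono _ _ (U_and _ _ IHN (HUnp N))). intros n [H1 H2]. lia.
Qed.

Lemma U_real M : U (fun n => M <= INR n).
Proof.
  destruct (nat_above M) as [N HN]. apply (U_mono _ _ (U_nat N)).
  intros n Hn. apply le_INR in Hn. lra.
Qed.

Lemma U_list {A} (l : list A) (P : A -> nat -> Prop) :
  (forall y, In y l -> U (P y)) -> U (fun n => forall y, In y l -> P y n).
Proof.
  induction l as [|a l IH]; intros H.
  - apply (U_mono _ _ U_true). intros n _ y [].
  - apply (U_mono _ _ (U_and _ _ (H a (or_introl eq_refl)) (IH (fun y Hy => H y (or_intror Hy))))).
    intros n [H1 H2] y [<-|Hy]; auto.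
Qed.

Lemma U_lt (P : nat -> nat -> Prop) K : (forall i, U (P i)) -> U (fun n => forall i, (i < K)%nat -> P i n).
Proof.
  induction K; intros H.
  - apply (U_mono _ _ U_true). intros n _ i Hi; lia.
  - apply (U_mono _ _ (U_and _ _ (IHK H) (H K))). intros n [H1 H2] i Hi.
    destruct (Nat.eq_dec i K). subst; auto. apply H1; lia.
Qed.

Definition Loc (F : Seq X) : Prop :=
  forall Rr eps, 0 < eps -> U (fun n => forall x, d o x <= Rr -> Cnorm (F n x) <= eps).

Lemma Csub_0 z : Csub z C0x = z. Proof. cx_eq. Qed.

Lemma local_of_I F : InI X d U o F -> Loc F.
Proof.
  intros [_ [G [r [_ [HFG [Hr HG]]]]]] Rr eps He.
  apply (U_mono _ _ (U_and _ _ (Hr Rr) (HFG eps He))).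
  intros n [H1 H2] x Hx. specialize (H2 x). unfold seq_sub in H2.
  rewrite HG in H2 by lra. rewrite Csub_0 in H2. lra.
Qed.

Lemma Loc_of_null F : ult_null X U F -> Loc F.
Proof. intros H Rr eps He. apply (U_mono _ _ (H eps He)). intros n Hn x _. specialize (Hn x); lra. Qed.

Fixpoint pre (P : nat -> nat -> Prop) (n j : nat) : nat :=
  match j with
  | O => O
  | S j' => if excluded_middle_informative (P j' n /\ pre P n j' = j') then S j' else pre P n j'
  end.

Lemma pre_prefix P n j i : (i < pre P n j)%nat -> P i n.
Proof.
  induction j; simpl. lia.
  destruct excluded_middle_informative as [[H1 H2]|H]; auto.
  intro Hi. destruct (Nat.eq_dec i j). subst; auto. apply IHj; lia.
Qed.

Lemma pre_full P n j : (forall i, (i < j)%nat -> P i n) -> pre P n j = j.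
Proof.
  induction j; simpl; auto. intros H.
  destruct excluded_middle_informative as [_|N]; auto. exfalso; apply N. split; auto.
Qed.

Lemma pre_mono P n j k : (j <= k)%nat -> (pre P n j <= pre P n k)%nat.
Proof.
  induction 1; auto. simpl. destruct excluded_middle_informative as [[_ H2]|_]; lia.
Qed.

Lemma I_of_local F : InSeq X d F -> Loc F -> InI X d U o F.
Proof.
  intros [HF0 [M HM]] HL. split. split; eauto.
  set (P := fun i n => forall x, d o x <= INR i + 2 -> Cnorm (F n x) <= / (INR i + 1)).
  assert (HP : forall i, U (P i)).
  { intros i. apply HL. apply Rinv_0_lt_compat. pose proof (pos_INR i); lra. }
  set (m := fun n => pre P n n).
  assert (Hm : forall K, U (fun n => (K <= m n)%nat)).
  { intros K. apply (U_mono _ _ (U_and _ _ (U_nat K) (U_lt P K HP))).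
    intros n [H1 H2]. unfold m. rewrite <- (pre_full P n K H2). apply pre_mono; auto. }
  set (G := fun n x => Cmul (F n x) (Csub Cone (phi (INR (m n) + 1) x))).
  exists G, (fun n => INR (m n)). split; [|split; [|split]].
  - split.
    + intros n. unfold G. apply C0_mul_bdd with 2. apply HF0.
      apply (cont_add (fun _ => Cone) (fun x => Copp (phi (INR (m n) + 1) x))).
      apply cont_const. apply cont_opp, phi_cont.
      intros x. eapply Rle_trans. apply Cnorm_sub_le. pose proof Cnorm_Cone. pose proof (phi_bound (INR (m n) + 1) x). lra.
    + exists (M * 2). intros n x. unfold G. rewrite Cnorm_mul.
      assert (Cnorm (Csub Cone (phi (INR (m n) + 1) x)) <= 2).
      { eapply Rle_trans. apply Cnorm_sub_le. pose proof Cnorm_Cone. pose proof (phi_bound (INR (m n) + 1) x). lra. }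
      pose proof (HM n x). pose proof (Cnorm_ge0 (F n x)).
      pose proof (Cnorm_ge0 (Csub Cone (phi (INR (m n) + 1) x))). nra.
  - intros eta Heta. destruct (archimed_cor1 eta Heta) as [K [HK1 HK2]].
    apply (U_mono _ _ (Hm K)). intros n Hn x. unfold seq_sub, G.
    replace (Csub (F n x) (Cmul (F n x) (Csub Cone (phi (INR (m n) + 1) x))))
      with (Cmul (F n x) (phi (INR (m n) + 1) x)) by (unfold Cone; cx_eq).
    rewrite Cnorm_mul.
    destruct (Rle_lt_dec (INR (m n) + 1) (d o x)).
    + rewrite phi_zero by auto. rewrite Cnorm_C0. pose proof (Cnorm_ge0 (F n x)). nra.
    + assert (Hmn : (1 <= m n)%nat) by lia.
      assert (HPn : P (m n - 1)%nat n). { apply pre_prefix with n. unfold m in *. lia. }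
      specialize (HPn x). rewrite minus_INR in HPn by lia. simpl in HPn.
      specialize (HPn ltac:(lra)). replace (INR (m n) - 1 + 1) with (INR (m n)) in HPn by ring.
      apply le_INR in Hn. apply le_INR in Hmn. simpl in Hmn.
      assert (0 < INR K) by (apply lt_0_INR; lia). assert (/ INR (m n) <= / INR K) by (apply Rinv_le_contravar; lra).
      pose proof (phi_bound (INR (m n) + 1) x). pose proof (Cnorm_ge0 (phi (INR (m n) + 1) x)).
      pose proof (Cnorm_ge0 (F n x)). nra.
  - intros Mm. destruct (nat_above Mm) as [N HN]. apply (U_mono _ _ (Hm N)). intros n Hn. apply le_INR in Hn. lra.
  - intros n x Hx. unfold G. rewrite phi_one by lra. cx_eq.
Qed.

Lemma InI_iff F : InI X d U o F <-> InSeq X d F /\ Loc F.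
Proof. split. intros H; split. apply H. apply local_of_I; auto. intros [H1 H2]; apply I_of_local; auto. Qed.

Lemma Rabs_le_inv2 x M : Rabs x <= M -> -M <= x <= M.
Proof. unfold Rabs; destruct Rcase_abs; intros; lra. Qed.
Lemma le_eps a c : (forall eps, 0 < eps -> a <= c + eps) -> a <= c.
Proof. intros H. destruct (Rle_lt_dec a c); auto. specialize (H ((a - c)/2)). lra. Qed.

Definition ek (k : nat) : R := / (INR k + 1).
Lemma ek_pos k : 0 < ek k.
Proof. unfold ek. apply Rinv_0_lt_compat. pose proof (pos_INR k); lra. Qed.
Lemma ek_small eps : 0 < eps -> exists k, ek k < eps.
Proof. intros He. destruct (archimed_cor1 eps He) as [N [H1 H2]]. exists N. unfold ek.
 apply Rle_lt_trans with (/ INR N); auto. apply Rinv_le_contravar. apply lt_0_INR; lia. lra. Qed.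
Lemma ek_mono k j : (k <= j)%nat -> ek j <= ek k.
Proof. intros H. unfold ek. apply le_INR in H. apply Rinv_le_contravar. pose proof (pos_INR k); lra. lra. Qed.

Lemma Csub_eq0 z w : Csub z w = C0x -> z = w.
Proof. destruct z, w; unfold Csub, Cadd, Copp, C0x; simpl; intros H; injection H; intros.
 f_equal; lra. Qed.

Lemma ulim_R (u : nat -> R) M : (forall n, Rabs (u n) <= M) ->
  exists L, forall eps, 0 < eps -> U (fun n => Rabs (u n - L) <= eps).
Proof.
  intros HM. set (E := fun y => U (fun n => y <= u n)).
  assert (Hb : bound E).
  { exists M. intros y Hy. destruct (Rle_lt_dec y M); auto. exfalso.
    destruct (U_ex _ Hy) as [n Hn]. specialize (HM n). apply Rabs_le_inv2 in HM. lra. }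
  assert (Hne : exists y, E y).
  { exists (- M). apply (U_mono _ _ U_true). intros n _. specialize (HM n). apply Rabs_le_inv2 in HM. lra. }
  destruct (completeness E Hb Hne) as [L [HL1 HL2]]. exists L. intros eps He.
  assert (A1 : U (fun n => L - eps <= u n)).
  { apply NNPP. intros N. assert (L <= L - eps). 2: lra. apply HL2. intros y Hy.
    destruct (Rle_lt_dec y (L - eps)); auto. exfalso. apply N. apply (U_mono _ _ Hy). intros; lra. }
  assert (A2 : U (fun n => u n <= L + eps)).
  { destruct HU as [_ [_ [_ Hd]]]. destruct (Hd (fun n => u n <= L + eps)) as [H|H]; auto.
    exfalso. assert (L + eps <= L). 2: lra. apply HL1. apply (U_mono _ _ H). intros; lra. }
  apply (U_mono _ _ (U_and _ _ A1 A2)). intros n [H1 H2]. apply Rabs_le; lra.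
Qed.

Lemma ulim_C (F : nat -> Cx) M : (forall n, Cnorm (F n) <= M) ->
  exists L, forall eps, 0 < eps -> U (fun n => Cnorm (Csub (F n) L) <= eps).
Proof.
  intros HM.
  destruct (ulim_R (fun n => re (F n)) M) as [L1 H1].
  { intros n. eapply Rle_trans. apply Cnorm_re. auto. }
  destruct (ulim_R (fun n => im (F n)) M) as [L2 H2].
  { intros n. eapply Rle_trans. apply Cnorm_im. auto. }
  exists (mkC L1 L2). intros eps He.
  apply (U_mono _ _ (U_and _ _ (H1 (eps/2) ltac:(lra)) (H2 (eps/2) ltac:(lra)))).
  intros n [A B]. eapply Rle_trans. apply Cnorm_le_reim. simpl. unfold Rminus in *. lra.
Qed.

Lemma ulim_bound (F : nat -> Cx) L c : (forall n, Cnorm (F n) <= c) ->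
  (forall eps, 0 < eps -> U (fun n => Cnorm (Csub (F n) L) <= eps)) -> Cnorm L <= c.
Proof.
  intros Hc HL. apply le_eps. intros eps He. destruct (U_ex _ (HL eps He)) as [n Hn].
  pose proof (Cnorm_le_sub L (F n)). rewrite Cnorm_sub_sym in Hn. specialize (Hc n). lra.
Qed.

Lemma bound_nonneg (F : Seq X) M : (forall n x, Cnorm (F n x) <= M) -> 0 <= M.
Proof. intros H. eapply Rle_trans. apply Cnorm_ge0. apply (H O o). Qed.

Lemma InSeq_add F G : InSeq X d F -> InSeq X d G -> InSeq X d (seq_add X F G).
Proof. intros [H1 [M1 B1]] [H2 [M2 B2]]. split. intros n; apply C0_add; auto.
 exists (M1 + M2). intros n x. unfold seq_add. eapply Rle_trans. apply Cnorm_triang.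
 specialize (B1 n x); specialize (B2 n x); lra. Qed.

Lemma InSeq_sub F G : InSeq X d F -> InSeq X d G -> InSeq X d (seq_sub X F G).
Proof. intros [H1 [M1 B1]] [H2 [M2 B2]]. split. intros n; apply C0_sub; auto.
 exists (M1 + M2). intros n x. unfold seq_sub. eapply Rle_trans. apply Cnorm_sub_le.
 specialize (B1 n x); specialize (B2 n x); lra. Qed.

Lemma InSeq_mul F G : InSeq X d F -> InSeq X d G -> InSeq X d (seq_mul X F G).
Proof. intros [H1 [M1 B1]] [H2 [M2 B2]]. split. intros n; apply C0_mul; auto.
 exists (M1 * M2). intros n x. unfold seq_mul. rewrite Cnorm_mul.
 pose proof (bound_nonneg _ _ B1). specialize (B1 n x); specialize (B2 n x);
 pose proof (Cnorm_ge0 (F n x)); pose proof (Cnorm_ge0 (G n x)). nra. Qed.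

Lemma InSeq_scal c F : InSeq X d F -> InSeq X d (seq_scal X c F).
Proof. intros [H1 [M1 B1]]. split.
 - intros n. unfold seq_scal.
   replace (fun x => Cmul c (F n x)) with (fun x => Cmul (F n x) c)
     by (apply functional_extensionality; intros; apply Cmul_comm).
   apply C0_mul_bdd with (Cnorm c); auto. apply cont_const. intros; lra.
 - exists (Cnorm c * M1). intros n x. unfold seq_scal. rewrite Cnorm_mul.
   specialize (B1 n x). pose proof (Cnorm_ge0 c). nra.
Qed.

Lemma C0_zero : C0 X d (fun _ => C0x).
Proof. split. apply cont_const. intros e He. exists (closed_ball X d o 0). split. apply Hprop.
 intros. rewrite Cnorm_C0; auto. Qed.

Lemma InSeq_diag a : C0 X d a -> InSeq X d (diag X a).
Proof. intros Ha. split. intros n; auto. destruct (C0_bounded a Ha) as [B HB]. exists B; intros; apply HB. Qed.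

Lemma Loc_add F G : Loc F -> Loc G -> Loc (seq_add X F G).
Proof. intros HF HG Rr eps He.
 apply (U_mono _ _ (U_and _ _ (HF Rr (eps/2) ltac:(lra)) (HG Rr (eps/2) ltac:(lra)))).
 intros n [A B] x Hx. unfold seq_add. eapply Rle_trans. apply Cnorm_triang.
 specialize (A x Hx); specialize (B x Hx); lra. Qed.

Lemma Loc_sub F G : Loc F -> Loc G -> Loc (seq_sub X F G).
Proof. intros HF HG Rr eps He.
 apply (U_mono _ _ (U_and _ _ (HF Rr (eps/2) ltac:(lra)) (HG Rr (eps/2) ltac:(lra)))).
 intros n [A B] x Hx. unfold seq_sub. eapply Rle_trans. apply Cnorm_sub_le.
 specialize (A x Hx); specialize (B x Hx); lra. Qed.

Lemma Loc_mul_l G F M : (forall n x, Cnorm (G n x) <= M) -> Loc F -> Loc (seq_mul X G F).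
Proof. intros HM HF Rr eps He. pose proof (bound_nonneg _ _ HM).
 apply (U_mono _ _ (HF Rr (eps / (M + 1)) ltac:(apply Rdiv_lt_0_compat; lra))).
 intros n A x Hx. unfold seq_mul. rewrite Cnorm_mul. specialize (A x Hx). specialize (HM n x).
 pose proof (Cnorm_ge0 (G n x)). pose proof (Cnorm_ge0 (F n x)).
 assert (eps / (M+1) * (M+1) = eps) by (field; lra).
 assert (eps / (M+1) * M <= eps / (M+1) * (M+1)).
 { apply Rmult_le_compat_l. left; apply Rdiv_lt_0_compat; lra. lra. }
 nra. Qed.

Lemma seq_mul_comm F G : seq_mul X F G = seq_mul X G F.
Proof. unfold seq_mul. apply functional_extensionality; intros n; apply functional_extensionality; intros x.
 apply Cmul_comm. Qed.

Lemma P1a : InI X d U o (seq_zero X).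
Proof. apply I_of_local. split. intros; apply C0_zero. exists 0. intros; unfold seq_zero; rewrite Cnorm_C0; lra.
 intros Rr eps He. apply (U_mono _ _ U_true). intros n _ x _. unfold seq_zero; rewrite Cnorm_C0; lra. Qed.

Lemma P1b F G : InI X d U o F -> InI X d U o G -> InI X d U o (seq_add X F G).
Proof. rewrite !InI_iff. intros [A B] [C D]. split. apply InSeq_add; auto. apply Loc_add; auto. Qed.

Lemma P1c c F : InI X d U o F -> InI X d U o (seq_scal X c F).
Proof. rewrite !InI_iff. intros [A B]. split. apply InSeq_scal; auto.
 change (Loc (seq_mul X (fun _ _ => c) F)). apply Loc_mul_l with (Cnorm c); auto. intros; lra. Qed.

Lemma P1d F G : InI X d U o F -> InSeq X d G ->
  InI X d U o (seq_mul X G F) /\ InI X d U o (seq_mul X F G).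
Proof. rewrite !InI_iff. intros [A B] C. assert (Hl : Loc (seq_mul X G F)).
 { destruct C as [_ [M HM]]. apply Loc_mul_l with M; auto. }
 split; split; try (apply InSeq_mul; auto); auto. rewrite seq_mul_comm; auto. Qed.

Lemma P1e F : InSeq X d F ->
  (forall e, 0 < e -> exists G, InI X d U o G /\ ult_le X U (seq_sub X F G) e) -> InI X d U o F.
Proof.
  intros HF H. apply I_of_local; auto. intros Rr eps He.
  destruct (H (eps/3) ltac:(lra)) as [G [HG HFG]]. apply local_of_I in HG.
  apply (U_mono _ _ (U_and _ _ (HG Rr (eps/3) ltac:(lra)) (HFG (eps/3) ltac:(lra)))).
  intros n [A B] x Hx. specialize (A x Hx). specialize (B x). unfold seq_sub in B.
  pose proof (Cnorm_le_sub (F n x) (G n x)). lra.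
Qed.

Lemma P1f F : InI X d U o F -> InCU X d U o F.
Proof.
  intros [HF [G [r [HG [HFG [Hr HG0]]]]]]. split; auto. exists G. split; auto. split; auto.
  intros rr e Hr0 He. exists 1. split. lra. apply (U_mono _ _ (Hr rr)).
  intros n Hn s t Hs Ht _. rewrite !HG0 by lra. replace (Csub C0x C0x) with C0x by cx_eq.
  rewrite Cnorm_C0; lra.
Qed.

Definition Eseq : Seq X := fun n x => phi (INR n) x.

Lemma ueq_refl F : ueq X U F F.
Proof. intros eta He. apply (U_mono _ _ U_true). intros n _ x. unfold seq_sub.
 replace (Csub (F n x) (F n x)) with C0x by cx_eq. rewrite Cnorm_C0; lra. Qed.

Lemma InSeq_E : InSeq X d Eseq.
Proof. split. intros n; apply phi_C0. exists 1; intros; apply phi_bound. Qed.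

Lemma P2 : exists E, InCU X d U o E /\
     forall F, InCU X d U o F ->
       InI X d U o (seq_sub X (seq_mul X E F) F) /\
       InI X d U o (seq_sub X (seq_mul X F E) F).
Proof.
  exists Eseq. split.
  - split. apply InSeq_E. exists Eseq. split. apply InSeq_E. split. apply ueq_refl.
    intros r e _ He. exists e. split; auto. apply (U_mono _ _ U_true). intros n _ s t _ _ Hst.
    unfold Eseq. eapply Rle_trans. apply phi_lip. lra.
  - intros F [HF _].
    assert (HL : Loc (seq_sub X (seq_mul X Eseq F) F)).
    { intros Rr eps He. apply (U_mono _ _ (U_real (Rr + 1))). intros n Hn x Hx.
      unfold seq_sub, seq_mul, Eseq. rewrite phi_one by lra. rewrite Cmul_one.
      replace (Csub (F n x) (F n x)) with C0x by cx_eq. rewrite Cnorm_C0; lra. }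
    split; apply I_of_local; try (apply InSeq_sub; auto; apply InSeq_mul; auto; apply InSeq_E).
    auto. rewrite seq_mul_comm; auto.
Qed.

Lemma unif_cont a r e : continuous X d a -> 0 < e -> exists del, 0 < del /\
  forall s t, d o s <= r -> d o t <= r -> d s t < del -> Cnorm (Csub (a s) (a t)) <= e.
Proof.
  intros Ha He.
  set (dl := fun y => proj1_sig (constructive_indefinite_description _ (Ha y (e/2) ltac:(lra)))).
  assert (Hdl : forall y, 0 < dl y /\ forall z, d y z < dl y -> Cnorm (Csub (a z) (a y)) < e/2).
  { intros y. unfold dl. destruct constructive_indefinite_description; simpl; auto. }
  destruct (Hprop o r X (fun y z => d y z < dl y / 2)) as [l Hl].
  - intros y; apply open_ball.
  - intros x _. exists x. rewrite d_refl. destruct (Hdl x); lra.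
  - destruct (list_minpos l (fun y => dl y / 2)) as [del [Hd Hmin]].
    { intros y _. destruct (Hdl y); lra. }
    exists del. split; auto. intros s t Hs Ht Hst.
    destruct (Hl s Hs) as [y [Hy Hys]]. specialize (Hmin y Hy).
    destruct (Hdl y) as [_ Hc]. pose proof (d_tri y s t).
    pose proof (Hc s ltac:(lra)). pose proof (Hc t ltac:(lra)).
    eapply Rle_trans. apply (Cnorm_sub_tri _ (a y)). rewrite (Cnorm_sub_sym (a y)). lra.
Qed.

Lemma P3a a : C0 X d a -> InCU X d U o (diag X a).
Proof.
  intros Ha. split. apply InSeq_diag; auto. exists (diag X a). split. apply InSeq_diag; auto.
  split. apply ueq_refl. intros r e _ He. destruct (unif_cont a r e (proj1 Ha) He) as [del [Hd H]].
  exists del. split; auto. apply (U_mono _ _ U_true). intros n _. unfold diag. auto.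
Qed.

Lemma P3b a b : C0 X d a -> C0 X d b ->
     InI X d U o (seq_sub X (diag X a) (diag X b)) -> a = b.
Proof.
  intros _ _ H. apply local_of_I in H. apply functional_extensionality. intros x.
  apply Csub_eq0. apply Cnorm_eq0. apply Rle_antisym. 2: apply Cnorm_ge0.
  apply le_eps. intros eps He. destruct (U_ex _ (H (d o x) eps He)) as [n Hn].
  specialize (Hn x ltac:(lra)). unfold seq_sub, diag in Hn. lra.
Qed.

Lemma P4c F : InCU X d U o F ->
  (forall a, C0 X d a -> InI X d U o (seq_mul X F (diag X a))) -> InI X d U o F.
Proof.
  intros [HF _] H. apply I_of_local; auto. intros Rr eps He.
  specialize (H (phi (Rr + 1)) (phi_C0 _)). apply local_of_I in H.
  apply (U_mono _ _ (H Rr eps He)). intros n Hn x Hx. specialize (Hn x Hx).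
  unfold seq_mul, diag in Hn. rewrite phi_one in Hn by lra. rewrite Cmul_comm, Cmul_one in Hn. auto.
Qed.

Lemma frac_le M e : 0 <= M -> 0 < e -> M * (e / (2 * (M + 1))) <= e / 2.
Proof. intros HM He. replace (M * (e / (2 * (M + 1)))) with (e / 2 * (M / (M + 1))) by (field; lra).
 assert (M / (M+1) <= 1). { unfold Rdiv. apply Rmult_le_reg_r with (M+1). lra. rewrite Rmult_assoc, Rinv_l by lra. lra. }
 nra. Qed.

Lemma frac_pos M e : 0 <= M -> 0 < e -> 0 < e / (2 * (M + 1)).
Proof. intros; apply Rdiv_lt_0_compat; lra. Qed.

Lemma mul_le p q P Q : 0 <= p -> p <= P -> 0 <= q -> q <= Q -> p * q <= P * Q.
Proof. intros. apply Rmult_le_compat; auto. Qed.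

Lemma P4a_core a F : C0 X d a -> InCU X d U o F ->
  exists b, C0 X d b /\ InI X d U o (seq_sub X (seq_mul X F (diag X a)) (diag X b)).
Proof.
  intros Ha [HF [G [HG [HFG HGe]]]].
  destruct HG as [HG0 [MG HMG]]. pose proof (bound_nonneg _ _ HMG) as HMG0.
  destruct (C0_bounded a Ha) as [A HA]. assert (HA0 : 0 <= A) by (eapply Rle_trans; [apply Cnorm_ge0|apply (HA o)]).
  set (h := fun n x => Cmul (G n x) (a x)).
  assert (Hh : forall n x, Cnorm (h n x) <= MG * Cnorm (a x)).
  { intros n x. unfold h. rewrite Cnorm_mul. apply mul_le; auto using Cnorm_ge0; lra. }
  assert (Hh' : forall x n, Cnorm (h n x) <= MG * A).
  { intros x n. eapply Rle_trans. apply Hh. apply Rmult_le_compat_l; auto. }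
  set (b := fun x => proj1_sig (constructive_indefinite_description _ (ulim_C (fun n => h n x) (MG * A) (Hh' x)))).
  assert (Hb : forall x eps, 0 < eps -> U (fun n => Cnorm (Csub (h n x) (b x)) <= eps)).
  { intros x. unfold b. destruct constructive_indefinite_description; simpl; auto. }
  assert (Hbb : forall x, Cnorm (b x) <= MG * Cnorm (a x)).
  { intros x. apply (ulim_bound (fun n => h n x)); auto. }
  assert (EQ : forall x e, 0 < e -> exists del, 0 < del /\
            U (fun n => forall y, d x y < del -> Cnorm (Csub (h n y) (h n x)) <= e)).
  { intros x e He.
    destruct (proj1 Ha x (e / (2 * (MG + 1))) (frac_pos MG e HMG0 He)) as [d1 [Hd1 H1]].
    pose proof (Rle_lt_trans _ _ _ (d_pos o x) (Rlt_plus_1 (d o x))) as Hr.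
    destruct (HGe (d o x + 1) (e / (2 * (A + 1))) Hr (frac_pos A e HA0 He)) as [d2 [Hd2 H2]].
    exists (Rmin 1 (Rmin d1 d2)). split. repeat apply Rmin_pos; auto; lra.
    apply (U_mono _ _ H2). intros n Hn y Hy.
    pose proof (Rmin_l 1 (Rmin d1 d2)). pose proof (Rmin_r 1 (Rmin d1 d2)).
    pose proof (Rmin_l d1 d2). pose proof (Rmin_r d1 d2).
    pose proof (d_tri o x y). pose proof (d_pos o x).
    assert (Hgy : Cnorm (Csub (G n y) (G n x)) <= e / (2 * (A + 1))).
    { apply Hn; try lra. rewrite d_sym; lra. }
    assert (Hay : Cnorm (Csub (a y) (a x)) <= e / (2 * (MG + 1))).
    { left. apply H1. lra. }
    unfold h.
    replace (Csub (Cmul (G n y) (a y)) (Cmul (G n x) (a x))) with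
      (Cadd (Cmul (G n y) (Csub (a y) (a x))) (Cmul (Csub (G n y) (G n x)) (a x))) by cx_eq.
    eapply Rle_trans. apply Cnorm_triang. rewrite !Cnorm_mul.
    pose proof (frac_le MG e HMG0 He). pose proof (frac_le A e HA0 He).
    assert (Cnorm (G n y) * Cnorm (Csub (a y) (a x)) <= MG * (e / (2 * (MG + 1)))).
    { apply mul_le; auto using Cnorm_ge0. }
    assert (Cnorm (Csub (G n y) (G n x)) * Cnorm (a x) <= (e / (2 * (A + 1))) * A).
    { apply mul_le; auto using Cnorm_ge0. }
    lra. }
  assert (Hbc : C0 X d b).
  { split.
    - intros x e He. destruct (EQ x (e/3) ltac:(lra)) as [del [Hd HS]].
      exists del. split; auto. intros y Hy.
      destruct (U_ex _ (U_and3 _ _ _ HS (Hb x (e/4) ltac:(lra)) (Hb y (e/4) ltac:(lra)))) as [n [A1 [A2 A3]]].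
      specialize (A1 y Hy).
      pose proof (Cnorm_sub_tri (b y) (h n y) (b x)). pose proof (Cnorm_sub_tri (h n y) (h n x) (b x)).
      rewrite Cnorm_sub_sym in A3. lra.
    - intros e He. destruct (proj2 Ha (e / (2 * (MG + 1))) (frac_pos MG e HMG0 He)) as [K [CK HK]].
      exists K. split; auto. intros x Hx. specialize (HK x Hx). specialize (Hbb x).
      pose proof (frac_le MG e HMG0 He).
      assert (MG * Cnorm (a x) <= MG * (e / (2 * (MG + 1)))) by (apply Rmult_le_compat_l; lra).
      lra. }
  assert (UC : forall eta, 0 < eta -> U (fun n => forall x, Cnorm (Csub (h n x) (b x)) <= eta)).
  { intros eta Heta.
    destruct (proj2 Ha (eta / (2 * (2 * MG + 1))) (frac_pos (2 * MG) eta ltac:(lra) Heta)) as [K [CK HK]].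
    set (e := eta / 8).
    assert (He : 0 < e) by (unfold e; lra).
    set (dl := fun y => proj1_sig (constructive_indefinite_description _ (EQ y e He))).
    assert (Hdl : forall y, 0 < dl y /\ U (fun n => forall z, d y z < dl y -> Cnorm (Csub (h n z) (h n y)) <= e)).
    { intros y. unfold dl. destruct constructive_indefinite_description; simpl; auto. }
    destruct (CK X (fun y z => d y z < dl y)) as [l Hl].
    - intros y; apply open_ball.
    - intros x _. exists x. rewrite d_refl. apply Hdl.
    - apply (U_mono _ _ (U_list l (fun y n => (forall z, d y z < dl y -> Cnorm (Csub (h n z) (h n y)) <= e)
                                          /\ Cnorm (Csub (h n y) (b y)) <= e)
              (fun y _ => U_and _ _ (proj2 (Hdl y)) (Hb y e He)))).
      intros n Hn x. destruct (classic (K x)) as [Kx|Kx].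
      + destruct (Hl x Kx) as [y [Hy Hyx]].
        destruct (Hn y Hy) as [B1 B2].
        destruct (U_ex _ (U_and _ _ (U_list l (fun y n => (forall z, d y z < dl y -> Cnorm (Csub (h n z) (h n y)) <= e)
                                          /\ Cnorm (Csub (h n y) (b y)) <= e)
              (fun y _ => U_and _ _ (proj2 (Hdl y)) (Hb y e He))) (Hb x e He))) as [m [Hm Hmx]].
        destruct (Hm y Hy) as [C1 C2].
        specialize (B1 x Hyx). specialize (C1 x Hyx).
        pose proof (Cnorm_sub_tri (h n x) (h n y) (b x)).
        pose proof (Cnorm_sub_tri (h n y) (b y) (b x)).
        pose proof (Cnorm_sub_tri (b y) (h m y) (b x)).
        pose proof (Cnorm_sub_tri (h m y) (h m x) (b x)).
        rewrite Cnorm_sub_sym in C1, C2.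
        unfold e in *. lra.
      + specialize (HK x Kx). eapply Rle_trans. apply Cnorm_sub_le.
        pose proof (Hh n x). pose proof (Hbb x).
        pose proof (frac_le (2 * MG) eta ltac:(lra) Heta).
        assert (MG * Cnorm (a x) <= MG * (eta / (2 * (2 * MG + 1)))) by (apply Rmult_le_compat_l; lra).
        lra. }
  exists b. split; auto. apply I_of_local.
  - apply InSeq_sub. apply InSeq_mul; auto. apply InSeq_diag; auto. apply InSeq_diag; auto.
  - apply Loc_of_null. intros eta Heta.
    apply (U_mono _ _ (U_and _ _ (HFG (eta / (2 * (A + 1))) (frac_pos A eta HA0 Heta)) (UC (eta/2) ltac:(lra)))).
    intros n [H1 H2] x. specialize (H1 x). specialize (H2 x). unfold seq_sub, seq_mul, diag in *.
    unfold h in H2.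
    pose proof (Cnorm_sub_tri (Cmul (F n x) (a x)) (Cmul (G n x) (a x)) (b x)).
    replace (Csub (Cmul (F n x) (a x)) (Cmul (G n x) (a x))) with (Cmul (Csub (F n x) (G n x)) (a x)) in H by cx_eq.
    rewrite Cnorm_mul in H. pose proof (frac_le A eta HA0 Heta).
    assert (Cnorm (Csub (F n x) (G n x)) * Cnorm (a x) <= eta / (2 * (A + 1)) * A).
    { apply mul_le; auto using Cnorm_ge0; lra. }
    lra.
Qed.

Lemma P4a a F : C0 X d a -> InCU X d U o F ->
  (exists b, C0 X d b /\ InI X d U o (seq_sub X (seq_mul X F (diag X a)) (diag X b))) /\
  (exists b, C0 X d b /\ InI X d U o (seq_sub X (seq_mul X (diag X a) F) (diag X b))).
Proof. intros Ha HF. split. apply P4a_core; auto. rewrite seq_mul_comm. apply P4a_core; auto. Qed.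

Lemma cauchy_lim (u : nat -> R) : (forall k j, Rabs (u k - u j) <= ek k + ek j) ->
  exists L, forall k, Rabs (u k - L) <= ek k.
Proof.
  intros Hu.
  assert (Hc : Cauchy_crit u).
  { intros eps He. destruct (ek_small (eps/2) ltac:(lra)) as [N HN]. exists N.
    intros n m Hn Hm. unfold Rdist. pose proof (Hu n m). pose proof (ek_mono N n Hn).
    pose proof (ek_mono N m Hm). lra. }
  destruct (R_complete u Hc) as [L HL]. exists L. intros k. apply le_eps. intros eps He.
  destruct (HL (eps/2) ltac:(lra)) as [N HN]. destruct (ek_small (eps/2) ltac:(lra)) as [j0 Hj0].
  set (j := Nat.max N j0). specialize (HN j ltac:(unfold j; lia)). unfold Rdist in HN.
  pose proof (ek_mono j0 j ltac:(unfold j; lia)). pose proof (Hu k j).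
  replace (u k - L) with ((u k - u j) + (u j - L)) by ring.
  eapply Rle_trans. apply Rabs_triang. lra.
Qed.

Lemma P4b F : InCU X d U o F ->
  (forall e, 0 < e -> exists a G, C0 X d a /\ InI X d U o G /\
       ult_le X U (seq_sub X (seq_sub X F (diag X a)) G) e) ->
  exists a, C0 X d a /\ InI X d U o (seq_sub X F (diag X a)).
Proof.
  intros [HF _] H.
  assert (HH : forall k, exists p : (X -> Cx) * Seq X, C0 X d (fst p) /\ InI X d U o (snd p) /\
       ult_le X U (seq_sub X (seq_sub X F (diag X (fst p))) (snd p)) (ek k)).
  { intros k. destruct (H (ek k) (ek_pos k)) as [a [G Hag]]. exists (a, G); auto. }
  set (pk := fun k => proj1_sig (constructive_indefinite_description _ (HH k))).
  assert (Hpk : forall k, C0 X d (fst (pk k)) /\ InI X d U o (snd (pk k)) /\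
       ult_le X U (seq_sub X (seq_sub X F (diag X (fst (pk k)))) (snd (pk k))) (ek k)).
  { intros k. unfold pk. destruct constructive_indefinite_description; simpl; auto. }
  set (ak := fun k => fst (pk k)). set (Gk := fun k => snd (pk k)).
  assert (Hcau : forall k j x, Cnorm (Csub (ak k x) (ak j x)) <= ek k + ek j).
  { intros k j x. apply le_eps. intros eps He.
    destruct (Hpk k) as [_ [Ik Uk]]. destruct (Hpk j) as [_ [Ij Uj]].
    apply local_of_I in Ik. apply local_of_I in Ij.
    destruct (U_ex _ (U_and _ _ (U_and3 _ _ _ (Ik (d o x) (eps/4) ltac:(lra)) (Ij (d o x) (eps/4) ltac:(lra))
       (Uk (eps/4) ltac:(lra))) (Uj (eps/4) ltac:(lra)))) as [n [[A1 [A2 A3]] A4]].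
    specialize (A1 x ltac:(lra)). specialize (A2 x ltac:(lra)). specialize (A3 x). specialize (A4 x).
    unfold seq_sub, diag in A3, A4. fold (ak k) (ak j) (Gk k) (Gk j) in *.
    replace (Csub (ak k x) (ak j x)) with
      (Cadd (Csub (Csub (Csub (F n x) (ak j x)) (Gk j n x)) (Csub (Csub (F n x) (ak k x)) (Gk k n x)))
            (Csub (Gk j n x) (Gk k n x))) by cx_eq.
    eapply Rle_trans. apply Cnorm_triang.
    pose proof (Cnorm_sub_le (Csub (Csub (F n x) (ak j x)) (Gk j n x)) (Csub (Csub (F n x) (ak k x)) (Gk k n x))).
    pose proof (Cnorm_sub_le (Gk j n x) (Gk k n x)). lra. }
  assert (Hre : forall x, exists L, forall k, Rabs (re (ak k x) - L) <= ek k).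
  { intros x. apply cauchy_lim. intros k j. eapply Rle_trans. 2: apply (Hcau k j x).
    eapply Rle_trans. 2: apply Cnorm_re. simpl. right; reflexivity. }
  assert (Him : forall x, exists L, forall k, Rabs (im (ak k x) - L) <= ek k).
  { intros x. apply cauchy_lim. intros k j. eapply Rle_trans. 2: apply (Hcau k j x).
    eapply Rle_trans. 2: apply Cnorm_im. simpl. right; reflexivity. }
  set (a := fun x => mkC (proj1_sig (constructive_indefinite_description _ (Hre x)))
                         (proj1_sig (constructive_indefinite_description _ (Him x)))).
  assert (Hak : forall k x, Cnorm (Csub (ak k x) (a x)) <= 2 * ek k).
  { intros k x. unfold a. destruct constructive_indefinite_description as [L1 H1].
    destruct constructive_indefinite_description as [L2 H2]. simpl.
    eapply Rle_trans. apply Cnorm_le_reim. simpl. specialize (H1 k). specialize (H2 k).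
    unfold Rminus in H1, H2. lra. }
  assert (Hak' : forall k x, Cnorm (Csub (a x) (ak k x)) <= 2 * ek k).
  { intros; rewrite Cnorm_sub_sym; auto. }
  assert (Ha : C0 X d a).
  { split.
    - intros x e He. destruct (ek_small (e/8) ltac:(lra)) as [k Hk].
      destruct (Hpk k) as [[Hc _] _]. destruct (Hc x (e/4) ltac:(lra)) as [del [Hd Hdel]].
      exists del. split; auto. intros y Hy. specialize (Hdel y Hy). fold (ak k) in Hdel.
      pose proof (Cnorm_sub_tri (a y) (ak k y) (a x)). pose proof (Cnorm_sub_tri (ak k y) (ak k x) (a x)).
      pose proof (Hak' k y). pose proof (Hak k x). lra.
    - intros e He. destruct (ek_small (e/8) ltac:(lra)) as [k Hk].
      destruct (Hpk k) as [[_ Hv] _]. destruct (Hv (e/2) ltac:(lra)) as [K [CK HK]].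
      exists K. split; auto. intros x Hx. specialize (HK x Hx). fold (ak k) in HK.
      pose proof (Cnorm_le_sub (a x) (ak k x)). pose proof (Hak' k x). lra. }
  exists a. split; auto. apply P1e.
  - apply InSeq_sub; auto. apply InSeq_diag; auto.
  - intros e He. destruct (ek_small (e/3) ltac:(lra)) as [k Hk]. exists (Gk k).
    destruct (Hpk k) as [_ [Ik Uk]]. split; auto. intros eta Heta.
    apply (U_mono _ _ (Uk eta Heta)). intros n Hn x. specialize (Hn x).
    unfold seq_sub, diag in *. fold (ak k) (Gk k) in Hn.
    replace (Csub (Csub (F n x) (a x)) (Gk k n x)) with
      (Cadd (Csub (Csub (F n x) (ak k x)) (Gk k n x)) (Csub (ak k x) (a x))) by cx_eq.
    eapply Rle_trans. apply Cnorm_triang. pose proof (Hak k x). lra.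
Qed.

End Main.

Theorem mainTheorem4 (X : Type) (d : X -> X -> R) (o : X)
  (U : (nat -> Prop) -> Prop)
  (Hmet : is_metric X d) (Hprop : proper_metric X d)
  (Hsc : second_countable X d) (Hlc : locally_compact X d)
  (HU : ultrafilter U) (HUnp : nonprincipal U) :
  ( InI X d U o (seq_zero X) /\
    (forall F G, InI X d U o F -> InI X d U o G -> InI X d U o (seq_add X F G)) /\
    (forall c F, InI X d U o F -> InI X d U o (seq_scal X c F)) /\
    (forall F G, InI X d U o F -> InSeq X d G ->
       InI X d U o (seq_mul X G F) /\ InI X d U o (seq_mul X F G)) /\
    (forall F, InSeq X d F ->
       (forall e, 0 < e -> exists G, InI X d U o G /\ ult_le X U (seq_sub X F G) e) ->
       InI X d U o F) /\
    (forall F, InI X d U o F -> InCU X d U o F) ) /\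
  (exists E, InCU X d U o E /\
     forall F, InCU X d U o F ->
       InI X d U o (seq_sub X (seq_mul X E F) F) /\
       InI X d U o (seq_sub X (seq_mul X F E) F)) /\
  (forall a, C0 X d a -> InCU X d U o (diag X a)) /\
  (forall a b, C0 X d a -> C0 X d b ->
     InI X d U o (seq_sub X (diag X a) (diag X b)) -> a = b) /\
  ( (forall a F, C0 X d a -> InCU X d U o F ->
       (exists b, C0 X d b /\
          InI X d U o (seq_sub X (seq_mul X F (diag X a)) (diag X b))) /\
       (exists b, C0 X d b /\
          InI X d U o (seq_sub X (seq_mul X (diag X a) F) (diag X b)))) /\
    (forall F, InCU X d U o F ->
       (forall e, 0 < e -> exists a G, C0 X d a /\ InI X d U o G /\
            ult_le X U (seq_sub X (seq_sub X F (diag X a)) G) e) ->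
       exists a, C0 X d a /\ InI X d U o (seq_sub X F (diag X a))) /\
    (forall F, InCU X d U o F ->
       (forall a, C0 X d a -> InI X d U o (seq_mul X F (diag X a))) ->
       InI X d U o F) ).
Proof.
  split; [|split; [|split; [|split]]].
  - split; [|split; [|split; [|split; [|split]]]].
    + apply P1a; auto.
    + apply P1b; auto.
    + apply P1c; auto.
    + apply P1d; auto.
    + apply P1e; auto.
    + apply P1f; auto.
  - apply P2; auto.
  - apply P3a; auto.
  - apply P3b; auto.
  - split; [|split].
    + apply P4a; auto.
    + apply P4b; auto.
    + apply P4c; auto.
Qed.
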